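(* Let $A$ be a reduced commutative $\mathbb{N}$-graded ring and let $I=A_{\ge d}$ for some positive integer $d$. Then $I$ is an integrally closed ideal of $A$.
   Context: For an $\mathbb{N}$-graded ring $A$ and a positive integer $m$, $A_{\ge m}=\bigoplus_{j\ge m}A_j$. *)

(* Defs.v *)
From HB Require Import structures.
From mathcomp Require Import all_boot all_order all_algebra.
Set Implicit Arguments. Unset Strict Implicit. Unset Printing Implicit Defensive.
Import Order.TTheory GRing.Theory.
Local Open Scope ring_scope.

(* An N-grading of a commutative ring A: a family G of additive subgroups
   G j = A_j such that A_i A_j ⊆ A_(i+j) and A = ⊕_j A_j (internal direct sum:
   every element is a finite sum of homogeneous elements, uniquely). *)
Definition is_Ngrading (A : comPzRingType) (G : nat -> A -> Prop) : Prop :=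
  [/\ (forall i, G i 0),
      (forall i x y, G i x -> G i y -> G i (x - y)),
      (forall i j x y, G i x -> G j y -> G (i + j)%N (x * y)),
      (forall x : A, exists (n : nat) (f : nat -> A),
          (forall i, G i (f i)) /\ x = \sum_(i < n) f i) &
      (forall (n : nat) (f : nat -> A), (forall i, G i (f i)) ->
          \sum_(i < n) f i = 0 -> forall i, (i < n)%N -> f i = 0)].

Definition graded_ge (A : comPzRingType) (G : nat -> A -> Prop) (m : nat) (x : A) : Prop :=
  exists (n : nat) (f : nat -> A), (forall i, G i (f i)) /\ x = \sum_(m <= i < n) f i.

Definition reduced (A : comPzRingType) : Prop :=
  forall (x : A) (n : nat), x ^+ n = 0 -> x = 0.

Definition is_ideal (A : comPzRingType) (I : A -> Prop) : Prop :=
  [/\ I 0, (forall x y, I x -> I y -> I (x + y)) & (forall r x, I x -> I (r * x))].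

Definition ideal_pow (A : comPzRingType) (I : A -> Prop) (k : nat) (x : A) : Prop :=
  exists (m : nat) (r : 'I_m -> A) (c : 'I_m -> 'I_k -> A),
    (forall i j, I (c i j)) /\ x = \sum_(i < m) r i * \prod_(j < k) c i j.

Definition integral_over_ideal (A : comPzRingType) (I : A -> Prop) (x : A) : Prop :=
  exists (n : nat) (a : nat -> A),
    [/\ (0 < n)%N,
        (forall k, (1 <= k <= n)%N -> ideal_pow I k (a k)) &
        x ^+ n + \sum_(1 <= k < n.+1) a k * x ^+ (n - k) = 0].

Definition integrally_closed_ideal (A : comPzRingType) (I : A -> Prop) : Prop :=
  is_ideal I /\ forall x, integral_over_ideal I x -> I x.

(* Main.v *)
Require Import Defs.
From mathcomp Require Import all_boot all_order all_algebra.
From mathcomp Require Import zify.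
Set Implicit Arguments. Unset Strict Implicit. Unset Printing Implicit Defensive.
Import GRing.Theory.
Local Open Scope ring_scope.

Definition GE (A : comPzRingType) (G : nat -> A -> Prop) (m : nat) (x : A) : Prop :=
  exists n (g : nat -> A), [/\ (forall i, G i (g i)), (forall i, (i < m)%N -> g i = 0),
     (forall i, (n <= i)%N -> g i = 0) & x = \sum_(i<n) g i].

Lemma pad (A : comPzRingType) (g : nat -> A) n N : (n <= N)%N ->
  (forall i, (n <= i)%N -> g i = 0) -> \sum_(i<N) g i = \sum_(i<n) g i.
Proof.
move=> hnN hz.
rewrite -(big_mkord xpredT) -(big_mkord xpredT) (big_cat_nat (leq0n n) hnN) /=.
rewrite [X in _ + X](_ : _ = 0) ?addr0 //.
by rewrite big_nat_cond big1 // => i /andP[/andP[hi _] _]; exact: hz.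
Qed.

Definition ind (A : comPzRingType) (j : nat) (y : A) := fun i : nat => if i == j then y else 0.

Lemma sum_ind (A : comPzRingType) j (y : A) N : (j < N)%N -> \sum_(i<N) ind j y i = y.
Proof.
move=> hj; rewrite (@pad _ _ j.+1) //; last first.
  by move=> i hi; rewrite /ind gtn_eqF.
rewrite big_ord_recr /= big1 ?add0r; first by rewrite /ind eqxx.
by move=> i _; rewrite /ind (ltn_eqF (ltn_ord i)).
Qed.


Lemma homD (A : comPzRingType) (G : nat -> A -> Prop) : is_Ngrading G ->
  forall i x y, G i x -> G i y -> G i (x + y).
Proof.
case=> h0 hs _ _ _ i x y hx hy.
have := hs i x (0 - y) hx (hs i 0 y (h0 i) hy).
by rewrite sub0r opprK.
Qed.

Lemma homN (A : comPzRingType) (G : nat -> A -> Prop) : is_Ngrading G ->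
  forall i x, G i x -> G i (- x).
Proof.
case=> h0 hs _ _ _ i x hx.
by have := hs i 0 x (h0 i) hx; rewrite sub0r.
Qed.

Lemma hom_ind (A : comPzRingType) (G : nat -> A -> Prop) : is_Ngrading G ->
  forall j y, G j y -> forall i, G i (ind j y i).
Proof.
move=> hG j y hy i; rewrite /ind; case: eqP => [->//|_].
by case: hG.
Qed.

Lemma GE0 (A : comPzRingType) (G : nat -> A -> Prop) : is_Ngrading G ->
  forall x, GE G 0 x.
Proof.
move=> hG x; have [h0 _ _ hdec _] := hG.
have [n [f [hf ->]]] := hdec x.
exists n, (fun i => if (i < n)%N then f i else 0); split => //.
- by move=> i; case: ifP.
- by move=> i hi; rewrite ltnNge hi.
- by apply: eq_bigr => i _; rewrite ltn_ord.
Qed.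

Lemma GE_zero (A : comPzRingType) (G : nat -> A -> Prop) : is_Ngrading G ->
  forall m, GE G m 0.
Proof.
move=> hG m; exists 0%N, (fun _ => 0); split => //; last by rewrite big_ord0.
by case: hG.
Qed.

Lemma GE_hom (A : comPzRingType) (G : nat -> A -> Prop) : is_Ngrading G ->
  forall m i y, (m <= i)%N -> G i y -> GE G m y.
Proof.
move=> hG m i y hmi hy; exists i.+1, (ind i y); split.
- exact: hom_ind.
- by move=> k hk; rewrite /ind; case: eqP => // e; move: hk; rewrite e ltnNge hmi.
- by move=> k hk; rewrite /ind gtn_eqF.
- by rewrite sum_ind.
Qed.

Lemma GE_add (A : comPzRingType) (G : nat -> A -> Prop) : is_Ngrading G ->
  forall m x y, GE G m x -> GE G m y -> GE G m (x + y).
Proof.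
move=> hG m x y [n [g [hg hgl hgh ->]]] [n' [g' [hg' hgl' hgh' ->]]].
exists (maxn n n'), (fun i => g i + g' i); split.
- by move=> i; apply: (homD hG).
- by move=> i hi; rewrite hgl // hgl' // addr0.
- by move=> i; rewrite geq_max => /andP[h1 h2]; rewrite hgh // hgh' // addr0.
- by rewrite big_split /= (pad (leq_maxl n n') hgh) (pad (leq_maxr n n') hgh').
Qed.

Lemma GE_opp (A : comPzRingType) (G : nat -> A -> Prop) : is_Ngrading G ->
  forall m x, GE G m x -> GE G m (- x).
Proof.
move=> hG m x [n [g [hg hgl hgh ->]]].
exists n, (fun i => - g i); split.
- by move=> i; apply: (homN hG).
- by move=> i hi; rewrite hgl // oppr0.
- by move=> i hi; rewrite hgh // oppr0.
- by rewrite sumrN.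
Qed.

Lemma GE_mono (A : comPzRingType) (G : nat -> A -> Prop) m m' x :
  (m <= m')%N -> GE G m' x -> GE G m x.
Proof.
move=> hm [n [g [hg hgl hgh ->]]]; exists n, g; split => // i hi.
by apply: hgl; exact: leq_trans hi hm.
Qed.

Lemma GE_big (A : comPzRingType) (G : nat -> A -> Prop) : is_Ngrading G ->
  forall m (I : Type) (r : seq I) (P : pred I) (F : I -> A),
  (forall i, P i -> GE G m (F i)) -> GE G m (\sum_(i <- r | P i) F i).
Proof.
move=> hG m I r P F hF; apply: big_ind => //.
- exact: GE_zero.
- exact: GE_add.
Qed.

Lemma GE_mul (A : comPzRingType) (G : nat -> A -> Prop) : is_Ngrading G ->
  forall m m' x y, GE G m x -> GE G m' y -> GE G (m + m') (x * y).
Proof.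
move=> hG m m' x y [n [g [hg hgl hgh ->]]] [n' [g' [hg' hgl' hgh' ->]]].
rewrite mulr_suml; apply: GE_big => // i _; rewrite mulr_sumr.
apply: GE_big => // k _.
case: (ltnP i m) => hi; first by rewrite hgl // mul0r; apply: GE_zero.
case: (ltnP k m') => hk; first by rewrite hgl' // mulr0; apply: GE_zero.
apply: (GE_hom hG (i := (i + k)%N)); first exact: leq_add.
by case: hG => _ _ hm _ _; apply: hm.
Qed.

Lemma GE_of_gge (A : comPzRingType) (G : nat -> A -> Prop) : is_Ngrading G ->
  forall m x, graded_ge G m x -> GE G m x.
Proof.
move=> hG m x [n [f [hf ->]]].
exists n, (fun i => if (m <= i < n)%N then f i else 0); split.
- by move=> i; case: ifP => _ //; case: hG.
- by move=> i hi; rewrite leqNgt hi.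
- by move=> i hi; rewrite [(i < n)%N]ltnNge hi andbF.
- rewrite big_geq_mkord big_mkcond /=; apply: eq_bigr => i _.
  by rewrite ltn_ord andbT.
Qed.

Lemma gge_of_GE (A : comPzRingType) (G : nat -> A -> Prop) m x :
  GE G m x -> graded_ge G m x.
Proof.
move=> [n [g [hg hgl hgh ->]]]; exists n, g; split => //.
rewrite big_geq_mkord /= [RHS]big_mkcond /=; apply: eq_bigr => i _.
by case: leqP => // hi; rewrite hgl.
Qed.

Lemma GE_key (A : comPzRingType) (G : nat -> A -> Prop) : is_Ngrading G ->
  forall j y, G j y -> GE G j.+1 y -> y = 0.
Proof.
move=> hG j y hy [n [g [hg hgl hgh e]]].
have [h0 hs _ _ huniq] := hG.
pose N := maxn n j.+1.
have := huniq N (fun i => ind j y i - g i).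
have hj : (j < N)%N by rewrite leq_max leqnn orbT.
move/(_ (fun i => hs _ _ _ (hom_ind hG hy i) (hg i))).
rewrite sumrB sum_ind // (pad (leq_maxl n j.+1) hgh) -e subrr.
move/(_ erefl j hj); rewrite /ind eqxx hgl // subr0; apply.
Qed.

Lemma GE_split (A : comPzRingType) (G : nat -> A -> Prop) : is_Ngrading G ->
  forall j x, GE G j x -> exists y z, [/\ G j y, GE G j.+1 z & x = y + z].
Proof.
move=> hG j x [n [g [hg hgl hgh ->]]].
have [h0 hs _ _ _] := hG.
exists (g j), (\sum_(i<n) g i - g j); split => //; last by rewrite addrC subrK.
pose N := maxn n j.+1.
have hj : (j < N)%N by rewrite leq_max leqnn orbT.
exists N, (fun i => g i - ind j (g j) i); split.
- by move=> i; apply: hs => //; apply: hom_ind.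
- move=> i hi; rewrite /ind; case: eqP => [->|ne]; first by rewrite subrr.
  by rewrite hgl ?subr0 // ltn_neqAle; apply/andP; split; [apply/eqP|].
- move=> i; rewrite geq_max => /andP[h1 h2].
  by rewrite hgh // /ind gtn_eqF // subr0.
- by rewrite sumrB sum_ind // (pad (leq_maxl n j.+1) hgh).
Qed.

Lemma GE_pow (A : comPzRingType) (G : nat -> A -> Prop) : is_Ngrading G ->
  forall m x p, GE G m x -> GE G (m * p) (x ^+ p).
Proof.
move=> hG m x p hx; elim: p => [|p IH]; first by rewrite muln0; apply: GE0.
by rewrite exprS mulnS; apply: GE_mul.
Qed.

Lemma hom_pow (A : comPzRingType) (G : nat -> A -> Prop) : is_Ngrading G ->
  forall j y p, G j y -> G (j * p.+1)%N (y ^+ p.+1).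
Proof.
move=> hG j y p hy; elim: p => [|p IH]; first by rewrite muln1 expr1.
rewrite exprS mulnS; by case: hG => _ _ hm _ _; apply: hm.
Qed.

Lemma GE_prod (A : comPzRingType) (G : nat -> A -> Prop) : is_Ngrading G ->
  forall d k (c : 'I_k -> A), (forall j, GE G d (c j)) -> GE G (k * d) (\prod_(j<k) c j).
Proof.
move=> hG d; elim => [|k IH] c hc; first by rewrite big_ord0; apply: GE0.
rewrite big_ord_recr /= mulSn addnC; apply: GE_mul => //.
exact: IH.
Qed.

Lemma GE_ideal_pow (A : comPzRingType) (G : nat -> A -> Prop) : is_Ngrading G ->
  forall d k v, ideal_pow (graded_ge G d) k v -> GE G (k * d) v.
Proof.
move=> hG d k v [m [r [c [hc ->]]]].
apply: GE_big => // i _; rewrite -[(k * d)%N]add0n; apply: GE_mul => //.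
- exact: GE0.
- by apply: GE_prod => // j; apply: GE_of_gge.
Qed.

Theorem lemma3p6 (A : comPzRingType) (G : nat -> A -> Prop) (d : nat) :
  is_Ngrading G -> reduced A -> (0 < d)%N ->
  integrally_closed_ideal (graded_ge G d).
Proof.
move=> hG hred hd; split.
  split.
  - by apply: gge_of_GE; apply: GE_zero.
  - move=> x y hx hy; apply: gge_of_GE; apply: GE_add => //; exact: GE_of_gge.
  - move=> r x hx; apply: gge_of_GE; rewrite -[d]add0n; apply: GE_mul => //.
      exact: GE0.
    exact: GE_of_gge.
move=> x [n [a [hn ha heq]]]; apply: gge_of_GE.
suff: forall j, (j <= d)%N -> GE G j x by apply.
elim => [_|j IH hj]; first exact: GE0.
have [y [z [hy hz exz]]] := GE_split hG (IH (ltnW hj)).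
suff y0 : y = 0 by rewrite exz y0 add0r.
apply: hred (n) _.
have hxj : GE G j x by apply: IH; exact: ltnW.
case: n hn ha heq => // p _ ha heq.
apply: (GE_key hG (hom_pow hG p hy)).
have -> : y ^+ p.+1 = - ((x ^+ p.+1 - y ^+ p.+1) + \sum_(1 <= k < p.+2) a k * x ^+ (p.+1 - k)).
  by rewrite addrAC heq sub0r opprK.
apply: GE_opp => //; apply: GE_add => //.
  rewrite subrXX; have -> : x - y = z by rewrite exz addrAC subrr add0r.
  have hyj : GE G j y by apply: (GE_hom hG (leqnn j)).
  apply: (@GE_mono _ _ _ (j.+1 + j * p)); first by lia.
  apply: GE_mul => //; apply: (GE_big hG) => i _.
  apply: (@GE_mono _ _ _ (j * (p - i) + j * i)); first by nia.
  by apply: GE_mul => //; apply: GE_pow.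
rewrite big_nat_cond; apply: (GE_big hG) => // k /andP[/andP[hk1 hk2] _].
apply: (@GE_mono _ _ _ (k * d + j * (p.+1 - k))); first by nia.
apply: GE_mul => //; last exact: GE_pow.
by apply: GE_ideal_pow => //; apply: ha; rewrite hk1 -ltnS.
Qed.
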